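(* Let $T_1$ and $T_2$ be two nontrivial trees with orders $m$ and $n$ respectively. Then $hn_{cc}(T_1\Box T_2)=m+n-1$.
   Context: All graphs are finite, simple and undirected. For a graph $G$ and $S\subseteq V(G)$, the cycle interval $\langle S\rangle$ consists of the vertices of $S$ together with every vertex $w\in V(G)\setminus S$ such that $G[S\cup\{w\}]$ contains a cycle through $w$; $S$ is cycle convex if $\langle S\rangle=S$; the cycle convex hull $\langle S\rangle_C$ is the smallest cycle convex set containing $S$; a hull set is a set $S$ with $\langle S\rangle_C=V(G)$, and $hn_{cc}(G)$ is the minimum cardinality of a hull set. The Cartesian product $G\Box H$ has vertex set $V(G)\times V(H)$, with $(g_1,h_1)\sim(g_2,h_2)$ iff ($g_1\sim g_2$ and $h_1=h_2$) or ($g_1=g_2$ and $h_1\sim h_2$). A tree is nontrivial if it has at least two vertices. *)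

(* Defs.v *)
From mathcomp Require Import all_boot.
Set Implicit Arguments. Unset Strict Implicit. Unset Printing Implicit Defensive.

Section Graphs.
Variables (T : finType) (e : rel T).

Definition simple_graph : Prop := symmetric e /\ irreflexive e.

Definition is_graph_cycle (c : seq T) : Prop :=
  [/\ uniq c, 3 <= size c & cycle e c].

Definition induced_cycle_through (X : {set T}) (w : T) : Prop :=
  exists c : seq T, [/\ is_graph_cycle c, w \in c & {subset c <= X}].

Definition in_cycle_interval (S : {set T}) (w : T) : Prop :=
  w \in S \/ (w \notin S /\ induced_cycle_through (S :|: [set w]) w).

Definition cycle_convex (S : {set T}) : Prop :=
  forall w, in_cycle_interval S w <-> w \in S.

(* Membership in the cycle convex hull <S>_C, the smallest cycle convex set
   containing S (= intersection of all cycle convex supersets of S). *)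
Definition in_cc_hull (S : {set T}) (x : T) : Prop :=
  forall C : {set T}, cycle_convex C -> S \subset C -> x \in C.

Definition cc_hull_set (S : {set T}) : Prop := forall x, in_cc_hull S x.

Definition cc_hull_number_is (k : nat) : Prop :=
  (exists S : {set T}, cc_hull_set S /\ #|S| = k) /\
  (forall S : {set T}, cc_hull_set S -> k <= #|S|).

Definition connected_graph : Prop := forall x y, connect e x y.
Definition acyclic_graph : Prop := forall c : seq T, ~ is_graph_cycle c.
Definition is_tree : Prop := [/\ simple_graph, connected_graph & acyclic_graph].

End Graphs.

Definition cart_prod (T1 T2 : finType) (e1 : rel T1) (e2 : rel T2) : rel (T1 * T2) :=
  fun x y => (e1 x.1 y.1 && (x.2 == y.2)) || ((x.1 == y.1) && e2 x.2 y.2).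

(* Main.v *)
Require Import Defs.
From mathcomp Require Import all_boot zify.
Set Implicit Arguments. Unset Strict Implicit. Unset Printing Implicit Defensive.

Lemma connect_ind' (T : finType) (e : rel T) (P : T -> Prop) x :
  P x -> (forall y z, P y -> e y z -> P z) -> forall y, connect e x y -> P y.
Proof.
move=> Px step y /connectP [p pth ->].
elim: p x Px pth => [|z p IH] x Px //= /andP [exz pth].
exact: (IH z (step _ _ Px exz) pth).
Qed.

Lemma path_neq (T : eqType) (R : rel T) u :
  (forall s t, R s t -> t != u) ->
  forall x s, path R x s -> x != u -> forall y, y \in x :: s -> y != u.
Proof.
move=> HR x s; elim: s x => [|z s IH] x /=.
  by move=> _ xu y; rewrite inE => /eqP ->.
move=> /andP [Rxz pth] xu y; rewrite inE => /orP [/eqP -> //|].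
exact: (IH z pth (HR _ _ Rxz)).
Qed.

Lemma tree_walk (T : finType) (e : rel T) (X : eqType) (r : rel X) (f : X -> T) :
 symmetric e -> acyclic_graph e -> (forall x y, r x y -> f x = f y \/ e (f x) (f y)) ->
 forall u a p, e u (f a) -> e u (f (last a p)) -> f a != f (last a p) -> path r a p ->
 exists2 x, x \in a :: p & f x = u.
Proof.
move=> sym acyc hr u a p ea eb neq pth.
case: (boolP (has (fun x => f x == u) (a :: p))) => [/hasP [x xin /eqP fx]| /hasPn H].
  by exists x.
exfalso.
pose R := [rel s t | e s t && (s != u) && (t != u)].
have conn : forall a, path r a p -> (forall x, x \in a :: p -> f x != u) ->
    connect R (f a) (f (last a p)).
  elim: (p) => [|y q IH] b /=; first by move=> _ _; exact: connect0.
  move=> /andP [rby pth'] Hx.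
  apply: connect_trans (IH y pth' _); last by move=> x xin; apply: Hx; rewrite inE xin orbT.
  case: (hr _ _ rby) => [->|eby]; first exact: connect0.
  apply: connect1; rewrite /R /= eby !Hx // ?inE ?eqxx ?orbT //.
have := conn a pth H.
case/connectP => s pR lastE.
case: (shortenP pR) lastE => s' pR' us' _ lastE.
have au : f a != u by apply: H; rewrite inE eqxx.
have HR : forall s1 t1, R s1 t1 -> t1 != u by move=> s1 t1 /andP [].
have neqs := path_neq HR pR' au.
have s'n : s' != [::].
  apply/eqP => s0; move: lastE neq; rewrite s0 /= => <-; by rewrite eqxx.
apply: (acyc (u :: f a :: s')); split.
- rewrite cons_uniq us' andbT; apply/negP => uin.
  by have := neqs u uin; rewrite eqxx.
- by case: s' s'n {pR' us' neqs lastE} => [|z s'] //.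
- rewrite /= rcons_path ea /=; apply/andP; split.
  + apply: sub_path pR' => s1 t1 /andP [] /andP [] //.
  + by rewrite -lastE sym.
Qed.

Fixpoint nbh (V : finType) (B : rel V) (r : V) (k : nat) : {set V} :=
  if k is k'.+1 then nbh B r k' :|: [set x | [exists y in nbh B r k', B x y]]
  else [set r].

Lemma count_edges (V E : finType) (B : rel V) (lab : V -> V -> E) (S : {set E}) (r : V) :
 (forall x y, B x y -> lab x y \in S) ->
 (forall x y x' y', B x y -> B x' y' -> lab x y = lab x' y' ->
     (x = x' /\ y = y') \/ (x = y' /\ y = x')) ->
 (forall x, connect B x r) -> #|V| <= #|S|.+1.
Proof.
move=> labS inj conn.
have exN x : exists k, x \in nbh B r k.
  case/connectP: (conn x) => p pth lastE.
  elim: p x pth lastE => [|z p IH] x /=.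
    by move=> _ ->; exists 0; rewrite inE.
  move=> /andP [Bxz pth] lastE; case: (IH z pth lastE) => k zk.
  exists k.+1; rewrite /= !inE; apply/orP; right; apply/existsP; exists z.
  by rewrite zk.
pose d x := ex_minn (exN x).
have dP x : x \in nbh B r (d x) /\ forall k, x \in nbh B r k -> d x <= k.
  by rewrite /d; case: ex_minnP.
have par x : x != r -> exists y, B x y && (d y < d x).
  move=> xr; case: (dP x); case Ed: (d x) => [|k] /=.
    by rewrite inE (negbTE xr).
  rewrite inE => /orP [xk min|].
    by have := min _ xk; rewrite ltnn.
  rewrite inE => /existsP [y /andP [yk Bxy]] _.
  exists y; rewrite Bxy /=; exact: (dP y).2 _ yk.
pose p x := odflt x [pick y | B x y && (d y < d x)].
have pP x : x != r -> B x (p x) && (d (p x) < d x).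
  move=> xr; rewrite /p; case: pickP => //= H.
  by case: (par x xr) => y; rewrite H.
pose g x := lab x (p x).
have ci : #|[set g x | x in [set~ r]]| = #|[set~ r]|.
  apply: card_in_imset => x y; rewrite !in_setC1 => xr yr /= eq.
  case/andP: (pP x xr) => Bx dx; case/andP: (pP y yr) => By dy.
  case: (inj _ _ _ _ Bx By eq) => [[]//|[E1 E2]].
  by move: dx dy; rewrite E2 -E1 => dx dy; have := ltn_trans dx dy; rewrite ltnn.
have sub : [set g x | x in [set~ r]] \subset S.
  apply/subsetP => z /imsetP [x]; rewrite in_setC1 => xr ->.
  by apply: labS; case/andP: (pP x xr).
have := subset_leq_card sub; rewrite ci cardsC1; lia.
Qed.

Section Main.
Variables (T1 T2 : finType) (e1 : rel T1) (e2 : rel T2).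
Hypotheses (sym1 : symmetric e1) (irr1 : irreflexive e1)
  (sym2 : symmetric e2) (irr2 : irreflexive e2)
  (acyc1 : acyclic_graph e1) (acyc2 : acyclic_graph e2).

Local Notation G := (cart_prod e1 e2).

Lemma G_sym : symmetric G.
Proof.
move=> [a b] [c d]; rewrite /cart_prod /= sym1 sym2.
by rewrite (eq_sym a) (eq_sym b).
Qed.

Lemma G_fst x y : G x y -> x.1 = y.1 \/ e1 x.1 y.1.
Proof. by case/orP => /andP [h1 h2]; [right | left; apply/eqP]. Qed.

Lemma G_snd x y : G x y -> x.2 = y.2 \/ e2 x.2 y.2.
Proof. by case/orP => /andP [h1 h2]; [left; apply/eqP | right]. Qed.

Definition Bs (S : {set T1 * T2}) : rel (T1 + T2) := fun x y =>
  match x, y with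
  | inl a, inr b => (a, b) \in S
  | inr b, inl a => (a, b) \in S
  | _, _ => false end.

Lemma Bs_sym S : symmetric (Bs S).
Proof. by case=> [a|b] [c|d]. Qed.

Definition Cs S := [set x : T1 * T2 | connect (Bs S) (inl x.1) (inr x.2)].

Lemma C_edge S x y : x \in Cs S -> y \in Cs S -> G x y ->
  connect (Bs S) (inl x.1) (inl y.1).
Proof.
rewrite !inE => cx cy /orP [/andP [_ /eqP E]|/andP [/eqP -> _]]; last exact: connect0.
apply: connect_trans cx _; by rewrite E (sym_connect_sym (Bs_sym S)).
Qed.

Lemma path_C S a q : path G a q -> (forall x, x \in a :: q -> x \in Cs S) ->
  forall x, x \in a :: q -> connect (Bs S) (inl a.1) (inl x.1).
Proof.
elim: q a => [|y q IH] a /=.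
  by move=> _ _ x; rewrite inE => /eqP ->; exact: connect0.
move=> /andP [Gay pth] HC x; rewrite inE => /orP [/eqP ->|xin]; first exact: connect0.
apply: connect_trans (IH y pth _ x xin).
  apply: C_edge Gay; apply: HC; by rewrite !inE eqxx ?orbT.
by move=> z zin; apply: HC; rewrite inE zin orbT.
Qed.

Lemma key S u v a q : uniq ((u, v) :: a :: q) -> 0 < size q ->
  path G (u, v) (rcons (a :: q) (u, v)) ->
  (forall x, x \in a :: q -> x \in Cs S) -> (u, v) \in Cs S.
Proof.
case: a => a1 a2.
move=> uq szq /= /andP [ea]; rewrite rcons_path => /andP [pth eb] HC.
have bin : last (a1, a2) q \in q by move: szq; case: (q) => [|y q0] //= _; exact: mem_last.
have ain : (a1, a2) \in (a1, a2) :: q by rewrite inE eqxx.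
have ab : (a1, a2) != last (a1, a2) q.
  apply/eqP => E; move: uq; rewrite /= -E in bin; by rewrite /= bin /= andbF.
have bin' : last (a1, a2) q \in (a1, a2) :: q by rewrite inE bin orbT.
have ca := HC _ ain; have cb := HC _ bin'.
have conn := path_C pth HC.
have cab := conn _ bin'.
have symB := Bs_sym S.
rewrite inE /=.
move: ea eb ab pth cb cab; case Eb: (last (a1, a2) q) => [b1 b2] ea eb ab pth cb cab.
rewrite inE /= in ca cb. rewrite /= in cab.
move: ea eb; rewrite /cart_prod /=.
move=> /orP [/andP [ua /eqP va]|/andP [/eqP ua va]] /orP [/andP [ub /eqP vb]|/andP [/eqP ub vb]].
-
  have n1 : a1 != b1 by apply: contra ab => /eqP ->; rewrite -va vb.
  have [x xin fx] := @tree_walk T1 e1 _ G fst sym1 acyc1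
     G_fst u (a1, a2) q ua ltac:(by rewrite Eb sym1) ltac:(by rewrite Eb) pth.
  apply: connect_trans (_ : connect _ _ (inl a1)) _.
    rewrite -fx (sym_connect_sym symB); exact: conn.
  by rewrite va.
- apply: connect_trans (_ : connect _ _ (inl a1)) _.
    by rewrite -ub (sym_connect_sym symB).
  by rewrite va.
- by rewrite ua; apply: connect_trans cab _; rewrite -vb; move: cb; rewrite inE.
- have n2 : a2 != b2 by apply: contra ab => /eqP ->; rewrite -ua ub.
  have [x xin fx] := @tree_walk T2 e2 _ G snd sym2 acyc2
     G_snd v (a1, a2) q va ltac:(by rewrite Eb sym2) ltac:(by rewrite Eb) pth.
  have cx := HC x xin; rewrite inE in cx.
  rewrite ua; apply: connect_trans (conn x xin) _; by rewrite -fx.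
Qed.


Lemma Cs_convex S : cycle_convex G (Cs S).
Proof.
move=> w; split; last by left.
case=> // [[wnC [c [[uc szc cyc] wc sub]]]].
case: (rot_to wc) => i p Hrot.
have uc' : uniq (w :: p) by rewrite -Hrot rot_uniq.
have cyc' : cycle G (w :: p) by rewrite -Hrot rot_cycle.
have sz' : 3 <= size (w :: p) by rewrite -Hrot size_rot.
have sub' : forall x, x \in p -> x \in Cs S.
  move=> x xp; have : x \in c by rewrite -(mem_rot i) Hrot inE xp orbT.
  move/sub; rewrite in_setU in_set1 => /orP [//|/eqP xw].
  by move: uc'; rewrite /= -xw xp.
case: p uc' cyc' sz' sub' {Hrot} => [|a q] //= uc' cyc' sz' sub'.
case: w {wnC wc sub} uc' cyc' => u v uc' cyc'.
apply: (key uc' _ cyc') => //.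
Qed.

Lemma square (C : {set T1 * T2}) a a' b b' : cycle_convex G C ->
  e1 a a' -> e2 b b' -> (a, b) \in C -> (a', b) \in C -> (a, b') \in C ->
  (a', b') \in C.
Proof.
move=> hC ea eb h1 h2 h3; apply/(hC (a', b')).1.
case: (boolP ((a', b') \in C)) => h; [by left | right; split => //].
have na : (a == a') = false by apply/negbTE; apply: contraTneq ea => ->; rewrite irr1.
have na' : (a' == a) = false by rewrite eq_sym.
have nb : (b == b') = false by apply/negbTE; apply: contraTneq eb => ->; rewrite irr2.
have nb' : (b' == b) = false by rewrite eq_sym.
exists [:: (a, b); (a', b); (a', b'); (a, b')]; split.
- split => //.
  + by rewrite /= !inE !xpair_eqE na na' nb ?nb' !eqxx /=.
  + by rewrite /= /cart_prod /= ea eb (sym1 a') (sym2 b') !eqxx ?orbT /= ea eb ?orbT.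
- by rewrite !inE eqxx !orbT.
- move=> x; rewrite !inE => /or4P [] /eqP ->; by rewrite ?h1 ?h2 ?h3 ?eqxx ?orbT.
Qed.

End Main.

Theorem mainTheorem11 (T1 T2 : finType) (e1 : rel T1) (e2 : rel T2) :
  is_tree e1 -> is_tree e2 -> 1 < #|T1| -> 1 < #|T2| ->
  cc_hull_number_is (cart_prod e1 e2) (#|T1| + #|T2| - 1).
Proof.
move=> [[s1 i1] c1 ac1] [[s2 i2] c2 ac2] m1 m2.
have /card_gt0P [u0 _] : 0 < #|T1| by lia.
have /card_gt0P [v0 _] : 0 < #|T2| by lia.
split.
- exists (setX [set u0] setT :|: setX setT [set v0]); split.
  + move=> x C hC sub.
    have row : forall b, (u0, b) \in C.
      by move=> b; apply/(subsetP sub); rewrite !inE eqxx.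
    have col : forall a, (a, v0) \in C.
      by move=> a; apply/(subsetP sub); rewrite !inE eqxx orbT.
    have all : forall a b, (a, b) \in C.
      move=> a; apply: (connect_ind' (P := fun a => forall b, (a, b) \in C)) (c1 u0 a) => //.
      move=> a' a'' Pa' e b.
      apply: (connect_ind' (P := fun b => (a'', b) \in C)) (c2 v0 b) => //.
      move=> b' b'' h eb.
      exact: (square s1 i1 s2 i2 hC e eb (Pa' b') h (Pa' b'')).
    by case: x.
  + have I : setX [set u0] setT :&: setX setT [set v0] = [set (u0, v0)].
      apply/setP => [[a b]]; rewrite !inE xpair_eqE andbT.
      by case: (a == u0); case: (b == v0).
    have := cardsUI (setX [set u0] [set: T2]) (setX [set: T1] [set v0]).
    rewrite I !cardsX !cards1 !cardsT; lia.
- move=> S hS.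
  have subS : S \subset Cs S.
    by apply/subsetP => [[a b]] ab; rewrite inE; apply: connect1.
  have allC : forall x, x \in Cs S := fun x => hS x _ (Cs_convex s1 s2 ac1 ac2 S) subS.
  have symB := sym_connect_sym (Bs_sym S).
  pose lab (x y : T1 + T2) : T1 * T2 :=
    match x, y with inl a, inr b => (a, b) | inr b, inl a => (a, b) | _, _ => (u0, v0) end.
  have labS : forall x y, Bs S x y -> lab x y \in S by case=> [a|b] [c|d].
  have inj : forall x y x' y', Bs S x y -> Bs S x' y' -> lab x y = lab x' y' ->
     (x = x' /\ y = y') \/ (x = y' /\ y = x').
    by case=> [a|b] [c|d] [a'|b'] [c'|d'] //= _ _ [-> ->]; auto.
  have conn : forall x, connect (Bs S) x (inl u0).
    case=> [a|b].
      apply: connect_trans (_ : connect _ _ (inr v0)) _.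
        by have := allC (a, v0); rewrite inE.
      by rewrite symB; have := allC (u0, v0); rewrite inE.
    by rewrite symB; have := allC (u0, b); rewrite inE.
  have := count_edges labS inj conn; rewrite card_sum; lia.
Qed.
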